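(* Let $t$ be a join node of a rooted nice tree decomposition of the Tanner graph $G$ with children $t_1,t_2$ ($B_t=B_{t_1}=B_{t_2}$). For $R\subseteq B_t^c$, $Q\subseteq B_t^v$ let $$F_t(R,Q)=\min\{f_{t_1}(R_1,Q)+f_{t_2}(R_2,Q)-|Q|\},\qquad G_t(R,Q)=\sum g_{t_1}(R_1,Q)\,g_{t_2}(R_2,Q),$$ where the minimum is over all pairs $(R_1,R_2)$ of subsets of $B_t^c$ with $R=R_1\oplus R_2\oplus\Gamma_o(G_t[Q\cup B_t^c])$, and the sum is over those pairs attaining the minimum. Then for all $R\subseteq B_t^c$, $Q\subseteq B_t^v$: if $Q\neq\emptyset$, $f_t(R,Q)=F_t(R,Q)$ and $g_t(R,Q)=G_t(R,Q)$; if $Q=\emptyset$, $f_t(R,Q)=\min\{F_t(R,Q),f_{t_1}(R,Q),f_{t_2}(R,Q)\}$ and $$g_t(R,Q)=\mathbb 1_{f_t(R,Q)=F_t(R,Q)}G_t(R,Q)+\mathbb 1_{f_t(R,Q)=f_{t_1}(R,Q)}g_{t_1}(R,Q)+\mathbb 1_{f_t(R,Q)=f_{t_2}(R,Q)}g_{t_2}(R,Q),$$ where $\mathbb 1_{x=y}$ is $1$ if $x=y$ and $0$ otherwise (whenever the minimum value is finite).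
   Context: $G=(\mathcal L\cup\mathcal R,E)$ is a Tanner graph (bipartite, variable nodes $\mathcal L$, check nodes $\mathcal R$). For a subgraph $H$ of $G$ and $S\subseteq\mathcal L$ in $H$, $H[S]$ is the subgraph of $H$ induced by $S$ together with its neighbours in $H$; for $L\subseteq\mathcal L$, $R\subseteq\mathcal R$, $H[L\cup R]$ is the subgraph of $H$ induced on the vertex set $L\cup R$. $\Gamma_o(\cdot)$ is the set of odd-degree check nodes in the indicated subgraph; $\oplus$ is symmetric difference. A trapping set is a nonempty subset of $\mathcal L$. A rooted nice tree decomposition $(T,(B_t))$ is a rooted tree decomposition (every vertex and edge lies in some bag; bags containing a given vertex form a connected subtree) where every node has at most two children, root and leaves have empty bags, a node with two children (join node) has the same bag as each child, and a node $t$ with one child $t'$ has $B_t=B_{t'}\cup\{v\}$ or $B_t=B_{t'}\setminus\{v\}$. For a node $t$: $B_t^c=B_t\cap\mathcal R$, $B_t^v=B_t\cap\mathcal L$; $G_t$ is the subgraph of $G$ induced on the union of the bags of all descendants of $t$ (including $t$); $\mathcal L(G_t)$ is its set of variable nodes. A trapping set $S$ has parameters $(R,Q)$ in $G_t$ ($R\subseteq B_t^c$, $Q\subseteq B_t^v$) if $S\subseteq\mathcal L(G_t)$, $S\cap B_t^v=Q$, and $\Gamma_o(G_t[S])=R$. $f_t(R,Q)$ is the minimum size of a trapping set with parameters $(R,Q)$ in $G_t$ ($+\infty$ if none exists), and $g_t(R,Q)$ is the number of trapping sets with parameters $(R,Q)$ in $G_t$ of size $f_t(R,Q)$ ($0$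 if none exists). *)

(* Defs.v *)
From mathcomp Require Import all_boot.
Set Implicit Arguments. Unset Strict Implicit. Unset Printing Implicit Defensive.

(* Extended naturals: None = +infinity. *)
Definition omin (a b : option nat) : option nat :=
  match a, b with
  | None, _ => b
  | _, None => a
  | Some x, Some y => Some (minn x y)
  end.
Definition oadd (a b : option nat) : option nat :=
  match a, b with
  | Some x, Some y => Some (x + y)
  | _, _ => None
  end.

Definition symd (T : finType) (A B : {set T}) : {set T} := (A :\: B) :|: (B :\: A).

(* Tanner graph: vertex type V, variable nodes = isvar, check nodes = ~~ isvar,
   symmetric edge relation e, every edge joins a variable node and a check node. *)
Definition tanner_graph (V : finType) (isvar : pred V) (e : rel V) : Prop :=
  symmetric e /\ (forall x y, e x y -> isvar x != isvar y).

Definition rooted_tree (N : finType) (par : N -> N) (root : N) : Prop :=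
  par root = root /\ (forall u, fconnect par u root).

Definition children (N : finType) (par : N -> N) (root t : N) : {set N} :=
  [set u | (u != root) && (par u == t)].

Definition tree_adj (N : finType) (par : N -> N) (root : N) : rel N :=
  fun u w => ((u != root) && (par u == w)) || ((w != root) && (par w == u)).

Definition tree_decomposition (V N : finType) (e : rel V) (par : N -> N) (root : N)
  (B : N -> {set V}) : Prop :=
  [/\ forall v, exists u, v \in B u,
      forall x y, e x y -> exists u, (x \in B u) /\ (y \in B u) &
      forall v x y, v \in B x -> v \in B y ->
        connect [rel a b | [&& tree_adj par root a b, v \in B a & v \in B b]] x y].

Definition nice_tree_decomposition (V N : finType) (e : rel V) (par : N -> N)
  (root : N) (B : N -> {set V}) : Prop :=
  [/\ rooted_tree par root,
      tree_decomposition e par root B,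
      forall t, #|children par root t| <= 2,
      B root = set0 /\ (forall t, children par root t = set0 -> B t = set0) &
      (forall t, #|children par root t| = 2 ->
         forall c, c \in children par root t -> B t = B c) /\
      (forall t c, children par root t = [set c] ->
         exists v, B t = B c :|: [set v] \/ B t = B c :\ v)].

Section DP.
Variables (V N : finType) (isvar : pred V) (e : rel V)
  (par : N -> N) (B : N -> {set V}).

(* vertex set of G_t: union of bags of descendants of t (including t) *)
Definition Vt (t : N) : {set V} := \bigcup_(u | fconnect par u t) B u.
Definition Lt (t : N) : {set V} := [set x in Vt t | isvar x].
Definition Bc (t : N) : {set V} := [set x in B t | ~~ isvar x].
Definition Bv (t : N) : {set V} := [set x in B t | isvar x].

(* Gamma_o(G_t[S]) for S a set of variable nodes of G_t: the check nodes of G_t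
   having an odd number of neighbours in S. *)
Definition gamma_o (t : N) (S : {set V}) : {set V} :=
  [set c in Vt t | ~~ isvar c & odd #|[set s in S | e s c]|].

(* Gamma_o(G_t[Q \cup B_t^c]) for Q a set of variable nodes of B_t. *)
Definition gammaQ (t : N) (Q : {set V}) : {set V} :=
  [set c in Bc t | odd #|[set s in Q | e s c]|].

Definition ts_param (t : N) (R Q S : {set V}) : bool :=
  [&& S != set0, S \subset Lt t, S :&: Bv t == Q & gamma_o t S == R].

Definition f (t : N) (R Q : {set V}) : option nat :=
  \big[omin/None]_(S : {set V} | ts_param t R Q S) Some #|S|.

Definition g (t : N) (R Q : {set V}) : nat :=
  #|[set S : {set V} | ts_param t R Q S & Some #|S| == f t R Q]|.

Definition join_pair (t : N) (R Q R1 R2 : {set V}) : bool :=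
  [&& R1 \subset Bc t, R2 \subset Bc t & R == symd (symd R1 R2) (gammaQ t Q)].

Definition join_val (t1 t2 : N) (Q R1 R2 : {set V}) : option nat :=
  omap (fun x => x - #|Q|) (oadd (f t1 R1 Q) (f t2 R2 Q)).

Definition Fjoin (t t1 t2 : N) (R Q : {set V}) : option nat :=
  \big[omin/None]_(p : {set V} * {set V} | join_pair t R Q p.1 p.2)
     join_val t1 t2 Q p.1 p.2.

Definition Gjoin (t t1 t2 : N) (R Q : {set V}) : nat :=
  \sum_(p : {set V} * {set V} |
          join_pair t R Q p.1 p.2 && (join_val t1 t2 Q p.1 p.2 == Fjoin t t1 t2 R Q))
     g t1 p.1 Q * g t2 p.2 Q.

End DP.

(* Main.v *)
From HB Require Import structures.
Require Import Defs.
From mathcomp Require Import all_boot zify.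
Set Implicit Arguments. Unset Strict Implicit. Unset Printing Implicit Defensive.

Definition ole (a b : option nat) : bool :=
  match a, b with
  | _, None => true
  | None, Some _ => false
  | Some x, Some y => x <= y
  end.

Lemma ole_refl a : ole a a. Proof. by case: a => //= n. Qed.
Lemma ole_None a : ole a None. Proof. by case: a. Qed.
Lemma ole_trans a b c : ole a b -> ole b c -> ole a c.
Proof. case: a; case: b; case: c => //= *; lia. Qed.
Lemma ole_anti a b : ole a b -> ole b a -> a = b.
Proof. case: a; case: b => //= x y h1 h2; congr Some; lia. Qed.
Lemma ole_ominl a b : ole (omin a b) a.
Proof. case: a; case: b => //= *; lia. Qed.
Lemma ole_ominr a b : ole (omin a b) b.
Proof. case: a; case: b => //= *; lia. Qed.
Lemma ole_omin a b c : ole c a -> ole c b -> ole c (omin a b).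
Proof. case: a; case: b; case: c => //= *; lia. Qed.

Lemma ominA : associative omin.
Proof. by case=> [x|] [y|] [z|] //=; rewrite minnA. Qed.
Lemma ominC : commutative omin.
Proof. by case=> [x|] [y|] //=; rewrite minnC. Qed.
Lemma omin0o : left_id None omin.
Proof. by case. Qed.
HB.instance Definition _ := Monoid.isComLaw.Build (option nat) None omin ominA ominC omin0o.

Section BigOmin.
Variables (I : finType) (P : pred I) (h : I -> option nat).
Lemma big_omin_le i : P i -> ole (\big[omin/None]_(j | P j) h j) (h i).
Proof. by move=> Pi; rewrite (bigD1 i) //=; apply: ole_ominl. Qed.
Lemma big_omin_attain :
  \big[omin/None]_(j | P j) h j = None \/
  exists2 i, P i & h i = \big[omin/None]_(j | P j) h j.
Proof.
apply: (big_ind (fun x => x = None \/ exists2 i, P i & h i = x)); first by left.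
- move=> x y [->|[i Pi hi]]; first by rewrite omin0o.
  case=> [->|[j Pj hj]]; first by right; exists i; rewrite // -hi; case: (h i).
  right; move: hi hj; case: x => [x|]; case: y => [y|] //= hi hj.
  + case: (leqP x y) => hxy.
    * by exists i => //; rewrite hi; congr Some; lia.
    * by exists j => //; rewrite hj; congr Some; lia.
  + by exists i.
  + by exists j.
  + by exists i.
- by move=> i Pi; right; exists i.
Qed.
End BigOmin.

Section Tree.
Variables (N : finType) (par : N -> N) (root : N).
Hypothesis hroot : par root = root.
Hypothesis hreach : forall u, fconnect par u root.

Lemma fconnect_par x y : fconnect par x y -> x != y -> fconnect par (par x) y.
Proof.
move=> /iter_findex; case: (findex par x y) => [<-|n]; first by rewrite eqxx.
by rewrite iterSr => <- _; apply: fconnect_iter.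
Qed.

Lemma iter_root n : iter n par root = root.
Proof. exact: iter_fix. Qed.

Lemma cycle_root x k : 0 < k -> iter k par x = x -> x = root.
Proof.
move=> k0 hk; have /iter_findex := hreach x; set j := findex par x root => hj.
have hm : forall m, iter (k * m) par x = x.
  elim=> [|m IH]; first by rewrite muln0.
  by rewrite mulnS iterD IH.
have hjk : j <= k * j by rewrite leq_pmull.
by rewrite -(hm j) -(subnK hjk) iterD hj iter_root.
Qed.

Lemma desc_child u t : fconnect par u t -> u != t ->
  exists a, [/\ par a = t, a != root, a != t & fconnect par u a].
Proof.
move=> /iter_findex; move: (findex par u t) => n.
elim: n u => [|n IH] u; first by move=> /= ->; rewrite eqxx.
rewrite iterSr => hn ut.
case: (eqVneq (par u) t) => [pu|put].
  exists u; split; [done| |done|exact: connect0].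
  by apply/eqP => ur; move: ut; rewrite -pu ur hroot eqxx.
have [a [pa ar at_ ca]] := IH _ hn put.
by exists a; split=> //; apply: connect_trans (fconnect1 _ _) ca.
Qed.

Lemma desc_disj w t1 t2 : par t1 = par t2 -> t1 != t2 -> t1 != root -> t2 != root ->
  fconnect par w t1 -> fconnect par w t2 -> False.
Proof.
move=> hp ne r1 r2 /iter_findex h1 /iter_findex h2.
move: h1 h2; move: (findex par w t1) (findex par w t2) => n1 n2.
wlog le12 : n1 n2 t1 t2 hp ne r1 r2 / n1 <= n2.
  move=> H; case: (leqP n1 n2) => h; first exact: H.
  move=> a b; apply: (H n2 n1 t2 t1) => //; [by rewrite eq_sym| exact: ltnW].
move=> h1 h2.
have hk : iter (n2 - n1) par t1 = t2 by rewrite -h1 -iterD subnK.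
case E: (n2 - n1) hk => [|k] hk; first by move: hk ne => /= ->; rewrite eqxx.
move: hk; rewrite iterSr hp -iterSr => hk.
by move: r2; rewrite (cycle_root (ltn0Sn k) hk) eqxx.
Qed.
End Tree.
Section Struct.
Variables (V N : finType) (e : rel V) (par : N -> N) (root : N) (B : N -> {set V}).
Hypothesis hroot : par root = root.
Hypothesis hreach : forall u, fconnect par u root.
Hypothesis tdec : tree_decomposition e par root B.

Lemma sep u w v c : fconnect par u c -> ~~ fconnect par w c ->
  v \in B u -> v \in B w -> v \in B c.
Proof.
move=> cu nw vu vw; case: tdec => _ _ hconn.
have := hconn v u w vu vw; case/connectP => p.
elim: p u cu vu => [|y p IH] u cu vu /=.
  by move=> _ wu; move: nw; rewrite wu cu.
case/andP => /and3P [adj _ vy] hp hw.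
case: (boolP (fconnect par y c)) => cy; first exact: (IH y cy vy hp hw).
move: adj; rewrite /tree_adj => /orP [/andP [ur /eqP pu] | /andP [yr /eqP py]].
- case: (eqVneq u c) => [ue|uc]; first by rewrite -ue.
  by move: cy; rewrite -pu (fconnect_par cu uc).
- by move: cy; rewrite (connect_trans (fconnect1 par y)) // py.
Qed.

Lemma edge_gen c0 t x s : B t = B c0 -> x \in Vt par B c0 -> x \notin B t ->
  e s x -> s \in Vt par B c0.
Proof.
move=> hB /bigcupP [w cw xw] xB esx; case: tdec => _ hedge _.
have [u [su xu]] := hedge _ _ esx.
case: (boolP (fconnect par u c0)) => cu; first by apply/bigcupP; exists u.
by move: xB; rewrite hB (sep cw cu xw xu).
Qed.

Variables (t t1 t2 : N).
Hypothesis hch : children par root t = [set t1; t2].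
Hypothesis ne12 : t1 != t2.

Lemma child1 : par t1 = t /\ t1 != root.
Proof.
have : t1 \in children par root t by rewrite hch !inE eqxx.
by rewrite inE => /andP [-> /eqP].
Qed.
Lemma child2 : par t2 = t /\ t2 != root.
Proof.
have : t2 \in children par root t by rewrite hch !inE eqxx orbT.
by rewrite inE => /andP [-> /eqP].
Qed.

Lemma Vt_split : B t = B t1 -> Vt par B t = Vt par B t1 :|: Vt par B t2.
Proof.
move=> hB1; have [p1 _] := child1; have [p2 _] := child2.
apply/setP => v; apply/bigcupP/setUP.
- case=> u cu vu; case: (eqVneq u t) => [ut|ut].
    by left; apply/bigcupP; exists t1; [exact: connect0 | rewrite -hB1 -ut].
  have [a [pa ar _ ca]] := desc_child hroot cu ut.
  have : a \in children par root t by rewrite inE ar pa eqxx.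
  rewrite hch !inE => /orP [] /eqP ea.
    by left; apply/bigcupP; exists u => //; rewrite -ea.
  by right; apply/bigcupP; exists u => //; rewrite -ea.
- by case=> [] /bigcupP [u cu vu]; exists u => //; apply: connect_trans cu _; first [rewrite -p1; exact: fconnect1 | rewrite -p2; exact: fconnect1].
Qed.

Lemma Vt_inter : B t = B t1 -> Vt par B t1 :&: Vt par B t2 \subset B t.
Proof.
move=> hB1; have [p1 r1] := child1; have [p2 r2] := child2.
apply/subsetP => v /setIP [/bigcupP [u cu vu] /bigcupP [w cw vw]].
rewrite hB1; apply: (sep cu _ vu vw); apply/negP => cw1.
by apply: (desc_disj hroot hreach _ ne12 r1 r2 cw1 cw); rewrite p1 p2.
Qed.

Lemma B_sub_Vt c : B c \subset Vt par B c.
Proof. by apply/subsetP => v vb; apply/bigcupP; exists c => //; exact: connect0. Qed.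
End Struct.
Lemma in_symd (T : finType) (A C : {set T}) x : (x \in symd A C) = (x \in A) (+) (x \in C).
Proof. by rewrite /symd !inE; case: (x \in A); case: (x \in C). Qed.

Lemma bool4 a b c d : a (+) d = b (+) c -> a = (b (+) c) (+) d.
Proof. by case: a; case: b; case: c; case: d. Qed.

Section Core.
Variables (V N : finType) (isvar : pred V) (e : rel V) (par : N -> N)
  (B : N -> {set V}) (t t1 t2 : N).
Hypothesis hB1 : B t = B t1.
Hypothesis hB2 : B t = B t2.
Hypothesis hVt : Vt par B t = Vt par B t1 :|: Vt par B t2.
Hypothesis hI : Vt par B t1 :&: Vt par B t2 \subset B t.
Hypothesis hS1 : B t \subset Vt par B t1.
Hypothesis hS2 : B t \subset Vt par B t2.
Hypothesis hE1 : forall x s, x \in Vt par B t1 -> x \notin B t -> e s x -> s \in Vt par B t1.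
Hypothesis hE2 : forall x s, x \in Vt par B t2 -> x \notin B t -> e s x -> s \in Vt par B t2.

Local Notation VT := (Vt par B).
Local Notation LT := (Lt isvar par B).
Local Notation BV := (Bv isvar B).
Local Notation BC := (Bc isvar B).
Local Notation GO := (gamma_o isvar e par B).
Local Notation GQ := (gammaQ isvar e B).

Lemma LT_split : LT t = LT t1 :|: LT t2.
Proof. by apply/setP => x; rewrite !inE hVt inE; case: (isvar x); rewrite ?andbT ?andbF. Qed.

Lemma LT_inter : LT t1 :&: LT t2 = BV t.
Proof.
apply/setP => x; rewrite !inE; case: (isvar x); rewrite ?andbT ?andbF //.
apply/idP/idP; first by move=> h; apply: (subsetP hI); rewrite inE.
by move=> h; rewrite (subsetP hS1 _ h) (subsetP hS2 _ h).
Qed.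

Lemma BV1 : BV t1 = BV t. Proof. by rewrite /Bv hB1. Qed.
Lemma BV2 : BV t2 = BV t. Proof. by rewrite /Bv hB2. Qed.
Lemma BC1 : BC t1 = BC t. Proof. by rewrite /Bc hB1. Qed.
Lemma BC2 : BC t2 = BC t. Proof. by rewrite /Bc hB2. Qed.

Lemma LT1_sub : LT t1 \subset LT t.
Proof. by rewrite LT_split subsetUl. Qed.
Lemma LT2_sub : LT t2 \subset LT t.
Proof. by rewrite LT_split subsetUr. Qed.

Lemma gamma_split (S : {set V}) : S \subset LT t ->
  GO t S = symd (symd (GO t1 (S :&: LT t1)) (GO t2 (S :&: LT t2))) (GQ t (S :&: BV t)).
Proof.
move=> SL; apply/setP => c; rewrite !in_symd /gamma_o /gammaQ !in_set.
have mS : forall s, s \in S -> (s \in LT t1) || (s \in LT t2).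
  by move=> s /(subsetP SL); rewrite LT_split inE.
case cB : (c \in B t).
  have c1 : c \in VT t1 by apply: (subsetP hS1).
  have c2 : c \in VT t2 by apply: (subsetP hS2).
  have c0 : c \in VT t by rewrite hVt inE c1.
  rewrite c0 c1 c2 /=.
  case: (isvar c) => //=.
  apply: bool4; rewrite -!oddD; congr odd.
  have hB : forall s, (s \in VT t1) && (s \in VT t2) = (s \in B t).
    move=> s; apply/idP/idP; first by move=> h; apply: (subsetP hI); rewrite inE.
    by move=> h; rewrite (subsetP hS1 _ h) (subsetP hS2 _ h).
  have hS' : forall s, (s \in S) ==> (isvar s && ((s \in VT t1) || (s \in VT t2))).
    move=> s; apply/implyP => /(subsetP SL); rewrite !inE hVt !inE.
    by case: (isvar s); rewrite ?andbT ?andbF.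
  rewrite -[X in _ = X]cardsUI; congr (_ + _); apply: eq_card => s; rewrite !inE;
  move: (hB s) (hS' s); case: (s \in S); case: (s \in VT t1); case: (s \in VT t2);
  case: (s \in B t); case: (isvar s); case: (e s c) => //=.
rewrite /= addbF.
case c1 : (c \in VT t1).
  have c2 : (c \in VT t2) = false.
    by apply/negbTE/negP => c2; move: cB; rewrite (subsetP hI) // inE c1.
  have c0 : c \in VT t by rewrite hVt inE c1.
  rewrite c0 c2 /= addbF; congr (_ && odd _); apply: eq_card => s; rewrite !inE.
  case sS: (s \in S) => //=; case es: (e s c); rewrite ?andbF ?andbT //=.
  rewrite (hE1 c1 (negbT cB) es); have := subsetP SL _ sS.
  by rewrite !inE => /andP [_ ->].
case c2 : (c \in VT t2).
  have c0 : c \in VT t by rewrite hVt inE c2 orbT.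
  rewrite c0 /=; congr (_ && odd _); apply: eq_card => s; rewrite !inE.
  case sS: (s \in S) => //=; case es: (e s c); rewrite ?andbF ?andbT //=.
  rewrite (hE2 c2 (negbT cB) es); have := subsetP SL _ sS.
  by rewrite !inE => /andP [_ ->].
by rewrite hVt inE c1 c2.
Qed.
Local Notation TS := (ts_param isvar e par B).
Local Notation F := (f isvar e par B).

Lemma symd0 (T : finType) (A : {set T}) : symd A set0 = A.
Proof. by apply/setP => x; rewrite in_symd inE addbF. Qed.

Lemma sym0d (T : finType) (A : {set T}) : symd set0 A = A.
Proof. by apply/setP => x; rewrite in_symd inE. Qed.

Lemma card_set0P (P : pred V) : #|[set s in (set0 : {set V}) | P s]| = 0.
Proof. by apply/eqP; rewrite cards_eq0; apply/eqP/setP => s; rewrite !inE. Qed.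
Lemma GO0 u : GO u set0 = set0.
Proof. by apply/setP => x; rewrite !inE card_set0P /= !andbF. Qed.
Lemma GQ0 u : GQ u set0 = set0.
Proof. by apply/setP => x; rewrite !inE card_set0P /= !andbF. Qed.

Lemma BV_sub1 : BV t \subset LT t1.
Proof. by rewrite -LT_inter subsetIl. Qed.
Lemma BV_sub2 : BV t \subset LT t2.
Proof. by rewrite -LT_inter subsetIr. Qed.

Lemma TS_sub u R Q S : TS u R Q S -> Q \subset S.
Proof. by case/and4P => _ _ /eqP <- _; apply: subsetIl. Qed.

Lemma fwd (R Q S : {set V}) : R \subset BC t -> TS t R Q S ->
  [/\ (S :&: LT t1) :|: (S :&: LT t2) = S,
      (S :&: LT t1) :&: (S :&: LT t2) = Q,
      join_pair isvar e B t R Q (GO t1 (S :&: LT t1)) (GO t2 (S :&: LT t2)),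
      S :&: LT t1 != set0 -> TS t1 (GO t1 (S :&: LT t1)) Q (S :&: LT t1) &
      S :&: LT t2 != set0 -> TS t2 (GO t2 (S :&: LT t2)) Q (S :&: LT t2)].
Proof.
move=> RB /and4P [Sn SL /eqP SQ /eqP SR].
have hid := gamma_split SL; rewrite SQ SR in hid.
split.
- by rewrite -setIUr -LT_split; apply/setIidPl.
- by rewrite setIACA setIid LT_inter.
- have sub1 : GO t1 (S :&: LT t1) \subset BC t.
    apply/subsetP => c cg; move: (cg); rewrite inE => /and3P [c1 nv _].
    case cB : (c \in B t); first by rewrite inE cB.
    have c2 : c \notin VT t2.
      by apply/negP => c2; move: cB; rewrite (subsetP hI) // inE c1.
    have : c \in R.
      rewrite hid !in_symd cg /=.
      have -> : (c \in GO t2 (S :&: LT t2)) = false by rewrite inE (negbTE c2).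
      have -> : (c \in GQ t Q) = false by rewrite inE inE cB.
      by [].
    by move/(subsetP RB); rewrite inE cB.
  have sub2 : GO t2 (S :&: LT t2) \subset BC t.
    apply/subsetP => c cg; move: (cg); rewrite inE => /and3P [c2 nv _].
    case cB : (c \in B t); first by rewrite inE cB.
    have c1 : c \notin VT t1.
      by apply/negP => c1; move: cB; rewrite (subsetP hI) // inE c1.
    have : c \in R.
      rewrite hid !in_symd cg /=.
      have -> : (c \in GO t1 (S :&: LT t1)) = false by rewrite inE (negbTE c1).
      have -> : (c \in GQ t Q) = false by rewrite inE inE cB.
      by [].
    by move/(subsetP RB); rewrite inE cB.
  by rewrite /join_pair sub1 sub2 hid eqxx.
- move=> n1; apply/and4P; split=> //; first exact: subsetIr.
  by rewrite BV1 -setIA (setIidPr BV_sub1) SQ.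
- move=> n2; apply/and4P; split=> //; first exact: subsetIr.
  by rewrite BV2 -setIA (setIidPr BV_sub2) SQ.
Qed.

Lemma bwd (R Q R1 R2 S1 S2 : {set V}) : TS t1 R1 Q S1 -> TS t2 R2 Q S2 ->
  join_pair isvar e B t R Q R1 R2 ->
  [/\ TS t R Q (S1 :|: S2), (S1 :|: S2) :&: LT t1 = S1,
      (S1 :|: S2) :&: LT t2 = S2 & S1 :&: S2 = Q].
Proof.
move=> /and4P [n1 L1 /eqP Q1 /eqP G1] /and4P [n2 L2 /eqP Q2 /eqP G2].
case/and3P => _ _ /eqP hR.
rewrite BV1 in Q1; rewrite BV2 in Q2.
have S21 : S2 :&: LT t1 = Q.
  by rewrite -{1}(setIidPl L2) -setIA [LT t2 :&: _]setIC LT_inter Q2.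
have S12 : S1 :&: LT t2 = Q.
  by rewrite -{1}(setIidPl L1) -setIA LT_inter Q1.
have QS1 : Q \subset S1 by rewrite -Q1 subsetIl.
have QS2 : Q \subset S2 by rewrite -Q2 subsetIl.
have e1 : (S1 :|: S2) :&: LT t1 = S1.
  by rewrite setIUl (setIidPl L1) S21; apply/setUidPl.
have e2 : (S1 :|: S2) :&: LT t2 = S2.
  by rewrite setIUl (setIidPl L2) S12; apply/setUidPr.
split=> //; last first.
  by rewrite -{1}(setIidPl L1) -setIA [LT t1 :&: S2]setIC S21; apply/setIidPr.
have SL : S1 :|: S2 \subset LT t.
  by rewrite subUset (subset_trans L1 LT1_sub) (subset_trans L2 LT2_sub).
have SQ : (S1 :|: S2) :&: BV t = Q by rewrite setIUl Q1 Q2 setUid.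
apply/and4P; split=> //.
- apply: contra n1 => /eqP h; apply/eqP; apply/eqP; rewrite -subset0 -h.
  exact: subsetUl.
- by rewrite SQ.
- by rewrite (gamma_split SL) e1 e2 SQ G1 G2 hR.
Qed.

Lemma single1 (R S : {set V}) : TS t1 R set0 S = TS t R set0 S && (S :&: LT t2 == set0).
Proof.
have key : S \subset LT t1 -> S :&: BV t = set0 -> GO t S = GO t1 S.
  move=> SL SQ; have SL' : S \subset LT t by apply: subset_trans SL LT1_sub.
  have S2 : S :&: LT t2 = set0 by rewrite -(setIidPl SL) -setIA LT_inter.
  by rewrite (gamma_split SL') S2 SQ GO0 GQ0 !symd0 (setIidPl SL).
apply/idP/idP.
- case/and4P => n SL /eqP SQ /eqP SR; rewrite BV1 in SQ.
  have S2 : S :&: LT t2 = set0 by rewrite -(setIidPl SL) -setIA LT_inter.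
  rewrite S2 eqxx andbT; apply/and4P; split=> //.
  + exact: subset_trans SL LT1_sub.
  + by rewrite SQ.
  + by rewrite key // SR.
- case/andP => /and4P [n SL /eqP SQ /eqP SR] /eqP S2.
  have SL1 : S \subset LT t1.
    apply/subsetP => x xS; have := subsetP SL _ xS; rewrite LT_split inE.
    case/orP => // x2; have : x \in S :&: LT t2 by rewrite inE xS.
    by rewrite S2 inE.
  apply/and4P; split=> //; first by rewrite BV1 SQ.
  by rewrite -key // SR.
Qed.

Lemma single2 (R S : {set V}) : TS t2 R set0 S = TS t R set0 S && (S :&: LT t1 == set0).
Proof.
have key : S \subset LT t2 -> S :&: BV t = set0 -> GO t S = GO t2 S.
  move=> SL SQ; have SL' : S \subset LT t by apply: subset_trans SL LT2_sub.
  have S1 : S :&: LT t1 = set0 by rewrite -(setIidPl SL) -setIA [LT t2 :&: _]setIC LT_inter.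
  by rewrite (gamma_split SL') S1 SQ GO0 GQ0 !symd0 sym0d (setIidPl SL).
apply/idP/idP.
- case/and4P => n SL /eqP SQ /eqP SR; rewrite BV2 in SQ.
  have S1 : S :&: LT t1 = set0 by rewrite -(setIidPl SL) -setIA [LT t2 :&: _]setIC LT_inter.
  rewrite S1 eqxx andbT; apply/and4P; split=> //.
  + exact: subset_trans SL LT2_sub.
  + by rewrite SQ.
  + by rewrite key // SR.
- case/andP => /and4P [n SL /eqP SQ /eqP SR] /eqP S1.
  have SL2 : S \subset LT t2.
    apply/subsetP => x xS; have := subsetP SL _ xS; rewrite LT_split inE.
    case/orP => // x1; have : x \in S :&: LT t1 by rewrite inE xS.
    by rewrite S1 inE.
  apply/and4P; split=> //; first by rewrite BV2 SQ.
  by rewrite -key // SR.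
Qed.
Local Notation FJ := (Fjoin isvar e par B t t1 t2).
Local Notation GJ := (Gjoin isvar e par B t t1 t2).
Local Notation JV := (join_val isvar e par B t1 t2).
Local Notation JP := (join_pair isvar e B t).
Local Notation G := (g isvar e par B).

Lemma f_le u (R Q S : {set V}) : TS u R Q S -> ole (F u R Q) (Some #|S|).
Proof. by move=> h; rewrite /f; apply: (@big_omin_le _ (TS u R Q) (fun S => Some #|S|)). Qed.

Lemma f_attain u (R Q : {set V}) : F u R Q = None \/ exists2 S, TS u R Q S & Some #|S| = F u R Q.
Proof. exact: (@big_omin_attain _ (TS u R Q) (fun S => Some #|S|)). Qed.

Lemma f_some u (R Q : {set V}) n : F u R Q = Some n -> exists2 S, TS u R Q S & #|S| = n.
Proof.
move=> h; case: (f_attain u R Q) => [|[S T hS]]; first by rewrite h.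
by exists S => //; move: hS; rewrite h => -[].
Qed.

Lemma f_Qle u (R Q : {set V}) n : F u R Q = Some n -> #|Q| <= n.
Proof. by case/f_some => S T <-; apply: subset_leq_card; apply: TS_sub T. Qed.

Lemma Fj_le (R Q R1 R2 : {set V}) : JP R Q R1 R2 -> ole (FJ R Q) (JV Q R1 R2).
Proof.
move=> h; rewrite /Fjoin.
exact: (@big_omin_le _ (fun p : {set V} * {set V} => JP R Q p.1 p.2)
   (fun p => JV Q p.1 p.2) (R1, R2)).
Qed.

Lemma Fj_attain (R Q : {set V}) : FJ R Q = None \/
  exists2 p : {set V} * {set V}, JP R Q p.1 p.2 & JV Q p.1 p.2 = FJ R Q.
Proof.
exact: (@big_omin_attain _ (fun p : {set V} * {set V} => JP R Q p.1 p.2)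
   (fun p => JV Q p.1 p.2)).
Qed.

Lemma f_le_Fj (R Q : {set V}) : ole (F t R Q) (FJ R Q).
Proof.
case: (Fj_attain R Q) => [->|[[R1 R2] /= jp <-]]; first exact: ole_None.
rewrite /join_val.
case E1: (F t1 R1 Q) => [a|]; last exact: ole_None.
case E2: (F t2 R2 Q) => [b|]; last exact: ole_None.
have [S1 T1 c1] := f_some E1; have [S2 T2 c2] := f_some E2.
have [T _ _ I12] := bwd T1 T2 jp.
apply: ole_trans (f_le T) _ => /=.
have := cardsUI S1 S2; rewrite I12 c1 c2; lia.
Qed.

Lemma JV_le (R Q S : {set V}) : R \subset BC t -> TS t R Q S -> S :&: LT t1 != set0 ->
  S :&: LT t2 != set0 ->
  ole (JV Q (GO t1 (S :&: LT t1)) (GO t2 (S :&: LT t2))) (Some #|S|).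
Proof.
move=> RB T n1 n2; have [U I _ T1 T2] := fwd RB T.
have l1 := f_le (T1 n1); have l2 := f_le (T2 n2).
rewrite /join_val.
case: (F t1 _ Q) l1 => [a|] //= l1; case: (F t2 _ Q) l2 => [b|] //= l2.
have := cardsUI (S :&: LT t1) (S :&: LT t2); rewrite U I; lia.
Qed.

Definition CJ (R Q S : {set V}) := [&& TS t R Q S, S :&: LT t1 != set0,
  S :&: LT t2 != set0 & Some #|S| == F t R Q].
Definition spl (S : {set V}) := (GO t1 (S :&: LT t1), GO t2 (S :&: LT t2)).

Lemma CJ_side (R Q S : {set V}) : R \subset BC t -> F t R Q = FJ R Q -> CJ R Q S ->
  JP R Q (spl S).1 (spl S).2 && (JV Q (spl S).1 (spl S).2 == FJ R Q).
Proof.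
move=> RB hF /and4P [T n1 n2 /eqP hS]; have [_ _ jp _ _] := fwd RB T.
rewrite /= jp /=; apply/eqP/ole_anti; last exact: Fj_le jp.
by apply: ole_trans (JV_le RB T n1 n2) _; rewrite hS hF ole_refl.
Qed.

Lemma CJ_empty (R Q S : {set V}) : R \subset BC t -> F t R Q != FJ R Q -> CJ R Q S = false.
Proof.
move=> RB hF; apply/negP => /and4P [T n1 n2 /eqP hS].
have [_ _ jp _ _] := fwd RB T.
have h1 := ole_trans (Fj_le jp) (JV_le RB T n1 n2); rewrite hS in h1.
by move: hF; rewrite (ole_anti (f_le_Fj R Q) h1) eqxx.
Qed.

Lemma count_J (R Q : {set V}) : R \subset BC t -> F t R Q = FJ R Q ->
  \sum_(S | CJ R Q S) 1 = GJ R Q.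
Proof.
move=> RB hF.
rewrite /Gjoin (partition_big spl
  (fun p : {set V} * {set V} => JP R Q p.1 p.2 && (JV Q p.1 p.2 == FJ R Q)));
  last by move=> S; apply: CJ_side.
apply: eq_bigr => [[R1 R2]] /andP [jp /eqP hv] /=.
rewrite sum1dep_card /g -cardsX.
set A := [set S | CJ R Q S && (spl S == (R1, R2))].
have inj : {in A &, injective (fun S : {set V} => (S :&: LT t1, S :&: LT t2))}.
  move=> S S'; rewrite !inE => /andP [/and4P [T _ _ _] _] /andP [/and4P [T' _ _ _] _].
  case=> h1 h2; have [U _ _ _ _] := fwd RB T; have [U' _ _ _ _] := fwd RB T'.
  by rewrite -U -U' h1 h2.
rewrite -(card_in_imset inj); apply: eq_card => -[X Y].
rewrite in_setX !inE; apply/imsetP/andP.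
- case=> S; rewrite inE => /andP [/and4P [T n1 n2 /eqP hS] /eqP sp] [-> ->].
  have [U I _ T1 T2] := fwd RB T.
  case: sp => g1 g2; rewrite -g1 -g2 (T1 n1) (T2 n2) /=.
  have hJ : JV Q (GO t1 (S :&: LT t1)) (GO t2 (S :&: LT t2)) = Some #|S|.
    by rewrite g1 g2 hv -hF hS.
  have l1 := f_le (T1 n1); have l2 := f_le (T2 n2).
  move: hJ l1 l2; rewrite /join_val.
  case E1: (F t1 _ Q) => [a|] //; case E2: (F t2 _ Q) => [b|] //= [hab] l1 l2.
  have qa := f_Qle E1; have := cardsUI (S :&: LT t1) (S :&: LT t2); rewrite U I => hc.
  by split; apply/eqP; congr Some; lia.
- case=> /andP [T1 /eqP h1] /andP [T2 /eqP h2].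
  have [T e1 e2 I] := bwd T1 T2 jp.
  exists (X :|: Y); last by rewrite e1 e2.
  move: (T1) (T2) => /and4P [nX _ _ /eqP GX] /and4P [nY _ _ /eqP GY].
  rewrite inE /CJ T /spl e1 e2 nX nY GX GY eqxx andbT /=.
  rewrite hF -hv /join_val -h1 -h2 /=.
  by have := cardsUI X Y; rewrite I => hc; apply/eqP; congr Some; lia.
Qed.

Lemma split_nonempty (R Q S : {set V}) : TS t R Q S -> R \subset BC t ->
  ((S :&: LT t1 == set0) && (S :&: LT t2 == set0)) = false.
Proof.
move=> T RB; have [U _ _ _ _] := fwd RB T.
apply/negP => /andP [/eqP h1 /eqP h2]; move: T => /and4P [n _ _ _].
by move: n; rewrite -U h1 h2 setU0 eqxx.
Qed.

Lemma split_Q (R Q S : {set V}) : TS t R Q S -> Q != set0 ->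
  (S :&: LT t1 != set0) && (S :&: LT t2 != set0).
Proof.
move=> T Qn; have QS := TS_sub T.
have QB : Q \subset BV t by case/and4P: T => _ _ /eqP <- _; apply: subsetIr.
apply/andP; split; apply: contra Qn => /eqP h; rewrite -subset0 -h subsetI QS.
  exact: subset_trans QB BV_sub1.
exact: subset_trans QB BV_sub2.
Qed.

Lemma sum_bool (T : finType) (P : pred T) : \sum_(x : T) (P x : nat) = \sum_(x | P x) 1.
Proof. by rewrite [RHS]big_mkcond; apply: eq_bigr => x _; case: (P x). Qed.

Theorem core_nonempty (R Q : {set V}) : R \subset BC t -> Q != set0 ->
  F t R Q = FJ R Q /\ G t R Q = GJ R Q.
Proof.
move=> RB Qn.
have hF : F t R Q = FJ R Q.
  apply: ole_anti (f_le_Fj R Q) _.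
  case: (f_attain t R Q) => [->|[S T <-]]; first exact: ole_None.
  have /andP [n1 n2] := split_Q T Qn.
  have [_ _ jp _ _] := fwd RB T.
  exact: ole_trans (Fj_le jp) (JV_le RB T n1 n2).
split=> //; rewrite /g -sum1dep_card -count_J //; apply: eq_bigl => S.
rewrite /CJ; case T: (TS t R Q S) => //=.
by have /andP [-> ->] := split_Q T Qn.
Qed.

Theorem core_empty (R : {set V}) : R \subset BC t ->
  F t R set0 = omin (FJ R set0) (omin (F t1 R set0) (F t2 R set0)) /\
  (F t R set0 != None ->
   G t R set0 = (F t R set0 == FJ R set0) * GJ R set0
     + (F t R set0 == F t1 R set0) * G t1 R set0
     + (F t R set0 == F t2 R set0) * G t2 R set0).
Proof.
move=> RB.
have hF : F t R set0 = omin (FJ R set0) (omin (F t1 R set0) (F t2 R set0)).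
  apply: ole_anti.
    apply: ole_omin; first exact: f_le_Fj.
    apply: ole_omin.
      case: (f_attain t1 R set0) => [->|[S T <-]]; first exact: ole_None.
      by apply: f_le; move: T; rewrite single1 => /andP [].
    case: (f_attain t2 R set0) => [->|[S T <-]]; first exact: ole_None.
    by apply: f_le; move: T; rewrite single2 => /andP [].
  case: (f_attain t R set0) => [->|[S T <-]]; first exact: ole_None.
  case E2: (S :&: LT t2 == set0).
    have T1 : TS t1 R set0 S by rewrite single1 T E2.
    exact: ole_trans (ole_trans (ole_ominr _ _) (ole_ominl _ _)) (f_le T1).
  case E1: (S :&: LT t1 == set0).
    have T2 : TS t2 R set0 S by rewrite single2 T E1.
    exact: ole_trans (ole_trans (ole_ominr _ _) (ole_ominr _ _)) (f_le T2).
  have [_ _ jp _ _] := fwd RB T.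
  apply: ole_trans (ole_ominl _ _) _.
  by apply: ole_trans (Fj_le jp) (JV_le RB T _ _); rewrite ?E1 ?E2.
split=> // _.
have le1 : ole (F t R set0) (F t1 R set0).
  by rewrite hF; apply: ole_trans (ole_ominr _ _) (ole_ominl _ _).
have le2 : ole (F t R set0) (F t2 R set0).
  by rewrite hF; apply: ole_trans (ole_ominr _ _) (ole_ominr _ _).
rewrite /g -sum1dep_card.
transitivity (\sum_(S : {set V}) ((CJ R set0 S : nat)
   + ((TS t1 R set0 S && (Some #|S| == F t R set0)) : nat)
   + ((TS t2 R set0 S && (Some #|S| == F t R set0)) : nat))).
  rewrite big_mkcond; apply: eq_bigr => S _.
  rewrite /CJ single1 single2.
  case T: (TS t R set0 S) => //=.
  move: (split_nonempty T RB).
  by case: (S :&: LT t1 == set0); case: (S :&: LT t2 == set0);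
    case: (Some #|S| == F t R set0).
rewrite !big_split /= !sum_bool.
congr (_ + _ + _).
- case: (eqVneq (F t R set0) (FJ R set0)) => [h|h].
    by rewrite count_J // mul1n.
  by rewrite mul0n big_pred0 // => S; apply: CJ_empty.
- case: (eqVneq (F t R set0) (F t1 R set0)) => [h|h].
    by rewrite mul1n -sum1dep_card h.
  rewrite mul0n big_pred0 // => S; apply/negP => /andP [T1 /eqP hS].
  have h' : F t R set0 = F t1 R set0.
    by apply: ole_anti le1 _; rewrite -hS; exact: f_le T1.
  by move: h; rewrite h' eqxx.
- case: (eqVneq (F t R set0) (F t2 R set0)) => [h|h].
    by rewrite mul1n -sum1dep_card h.
  rewrite mul0n big_pred0 // => S; apply/negP => /andP [T2 /eqP hS].
  have h' : F t R set0 = F t2 R set0.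
    by apply: ole_anti le2 _; rewrite -hS; exact: f_le T2.
  by move: h; rewrite h' eqxx.
Qed.
End Core.

Theorem mainTheorem11 (V N : finType) (isvar : pred V) (e : rel V)
  (par : N -> N) (root : N) (B : N -> {set V}) (t t1 t2 : N) :
  tanner_graph isvar e ->
  nice_tree_decomposition e par root B ->
  children par root t = [set t1; t2] -> t1 != t2 ->
  B t = B t1 -> B t = B t2 ->
  forall R Q : {set V}, R \subset Bc isvar B t -> Q \subset Bv isvar B t ->
  (Q != set0 ->
     f isvar e par B t R Q = Fjoin isvar e par B t t1 t2 R Q /\
     g isvar e par B t R Q = Gjoin isvar e par B t t1 t2 R Q) /\
  (Q = set0 ->
     f isvar e par B t R Q =
       omin (Fjoin isvar e par B t t1 t2 R Q)
            (omin (f isvar e par B t1 R Q) (f isvar e par B t2 R Q)) /\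
     (f isvar e par B t R Q != None ->
       g isvar e par B t R Q =
         (f isvar e par B t R Q == Fjoin isvar e par B t t1 t2 R Q)
           * Gjoin isvar e par B t t1 t2 R Q
         + (f isvar e par B t R Q == f isvar e par B t1 R Q) * g isvar e par B t1 R Q
         + (f isvar e par B t R Q == f isvar e par B t2 R Q) * g isvar e par B t2 R Q)).
Proof.
move=> _ [[hroot hreach] tdec _ _ _] hch ne12 hB1 hB2 R Q RB QB.
have hVt : Vt par B t = Vt par B t1 :|: Vt par B t2.
  exact: (Vt_split hroot hch hB1).
have hI : Vt par B t1 :&: Vt par B t2 \subset B t.
  exact: (Vt_inter hroot hreach tdec hch ne12 hB1).
have hS1 : B t \subset Vt par B t1 by rewrite hB1; exact: B_sub_Vt.
have hS2 : B t \subset Vt par B t2 by rewrite hB2; exact: B_sub_Vt.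
have hE1 : forall x s, x \in Vt par B t1 -> x \notin B t -> e s x -> s \in Vt par B t1.
  by move=> x s; apply: (edge_gen tdec hB1).
have hE2 : forall x s, x \in Vt par B t2 -> x \notin B t -> e s x -> s \in Vt par B t2.
  by move=> x s; apply: (edge_gen tdec hB2).
split.
  by move=> Qn; exact: (core_nonempty hB1 hB2 hVt hI hS1 hS2 hE1 hE2 RB Qn).
by move=> ->; exact: (core_empty hB1 hB2 hVt hI hS1 hS2 hE1 hE2 RB).
Qed.
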